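(* There is a topological space of size $\mathfrak{c}$ which is $NWD$-separable but not $d$-separable.
   Context: A space $X$ is $NWD$-separable if for every sequence $\{D_n:n<\omega\}$ of dense subsets of $X$ there are nowhere dense sets $E_n\subseteq D_n$ such that $\bigcup_{n<\omega}E_n$ is dense. A space is $d$-separable if it has a dense subset which is a countable union of discrete subspaces. $\mathfrak{c}=2^{\aleph_0}$. *)

(* Defs.v *)
From HB Require Import structures.
From mathcomp Require Import all_boot all_order.
From mathcomp Require Import boolp classical_sets cardinality topology.
Set Implicit Arguments. Unset Strict Implicit. Unset Printing Implicit Defensive.
Local Open Scope classical_set_scope.

Definition nowhere_dense (T : topologicalType) (E : set T) : Prop :=
  (closure E)^° = set0.

Definition discrete_subspace (T : topologicalType) (D : set T) : Prop :=
  forall x, D x -> exists U : set T, open U /\ U `&` D = [set x].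

Definition NWD_separable (T : topologicalType) : Prop :=
  forall D : nat -> set T, (forall n, dense (D n)) ->
    exists E : nat -> set T,
      (forall n, E n `<=` D n /\ nowhere_dense (E n)) /\
      dense (\bigcup_n E n).

Definition d_separable (T : topologicalType) : Prop :=
  exists S : nat -> set T,
    (forall n, discrete_subspace (S n)) /\ dense (\bigcup_n S n).

(* Main.v *)
Require Import Defs.
From HB Require Import structures.
From mathcomp Require Import all_boot all_order.
From mathcomp Require Import boolp classical_sets cardinality topology.
From mathcomp Require Import zify.
Local Open Scope classical_set_scope.
Local Open Scope card_scope.

Definition X := nat -> bool.
HB.instance Definition _ := Choice.on X.

Definition phi (k : nat) (g : nat -> bool) : X :=
  fun i => if i < k then false else if i == k then true else g (i - k.+1).

Definition q (f : X) : nat :=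
  match pselect (exists i, f i) with left H => ex_minn H | right _ => 0 end.

Lemma q_phi k g : q (phi k g) = k.
Proof.
rewrite /q; case: pselect => [H|H]; last first.
  by exfalso; apply: H; exists k; rewrite /phi ltnn eqxx.
case: ex_minnP => m Hm Hmin.
apply/eqP; rewrite eqn_leq; apply/andP; split.
- by apply: Hmin; rewrite /phi ltnn eqxx.
- by move: Hm; rewrite /phi; case: (ltnP m k).
Qed.

Lemma phi_inj k : injective (phi k).
Proof.
move=> a b e; apply/funext => i.
have := congr1 (fun h => h (i + k.+1)) e; rewrite /phi /=.
have -> : (i + k.+1 < k) = false by lia.
have -> : (i + k.+1 == k) = false by lia.
by rewrite addnK.
Qed.

Lemma cantor_inj (Z : set (nat -> bool)) (f : (nat -> bool) -> nat) :
  {in Z &, injective f} -> exists d, ~ Z d.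
Proof.
move=> finj.
pose d := fun m => ~~ `[< exists z, Z z /\ f z = m /\ z m >].
exists d => Zd.
have E0 : d (f d) = ~~ `[< exists z, Z z /\ f z = f d /\ z (f d) >] by [].
case E: (d (f d)).
  have H : ~~ `[< exists z, Z z /\ f z = f d /\ z (f d) >] by rewrite -E0 E.
  by move/asboolPn: H; apply; exists d; split => //; split => //; rewrite E.
have H : `[< exists z, Z z /\ f z = f d /\ z (f d) >].
  by apply: negbFE; rewrite -E0.
move/asboolP: H => [z [Zz [fz zm]]].
have zd : z = d := finj z d (mem_set Zz) (mem_set Zd) fz.
by rewrite zd E in zm.
Qed.

Lemma fiber_big (Z : set X) k : countable Z -> exists y, q y = k /\ ~ Z y.
Proof.
move=> /countable_injP [f finj].
have inj2 : {in (phi k) @^-1` Z &, injective (f \o phi k)}.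
  move=> a b /set_mem Za /set_mem Zb /= e.
  exact: (@phi_inj k a b (finj _ _ (mem_set Za) (mem_set Zb) e)).
have [d nd] := cantor_inj _ _ inj2.
by exists (phi k d); split; [exact: q_phi | exact: nd].
Qed.

Lemma countableU T (A B : set T) :
  countable A -> countable B -> countable (A `|` B).
Proof.
move=> cA cB.
have -> : A `|` B = \bigcup_(i in [set: bool]) (if i then A else B).
  apply/seteqP; split=> x.
    by case=> H; [exists true|exists false].
  by case=> -[] _ H; [left|right].
apply: bigcup_countable; first exact: countableP.
by case.
Qed.

Lemma notin_large (F : seq nat) : exists N, forall k, N <= k -> k \notin F.
Proof.
elim: F => [|a F [N HN]]; first by exists 0.
exists (maxn N a.+1) => k; rewrite geq_max => /andP[h1 h2].
rewrite in_cons negb_or (HN _ h1) andbT.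
by apply/eqP => e; rewrite e ltnn in h2.
Qed.

Definition W (Z : set X) (F : seq nat) : set X :=
  [set y | q y \notin F /\ ~ Z y].

Definition op (O : set X) : Prop :=
  forall x, O x -> exists Z F, countable Z /\ q x \notin F /\ W Z F `<=` O.

Lemma opT : op setT.
Proof. by move=> x _; exists set0, [::]; split. Qed.

Lemma opI : setI_closed op.
Proof.
move=> A B oA oB x [Ax Bx].
have [Z1 [F1 [c1 [n1 s1]]]] := oA x Ax.
have [Z2 [F2 [c2 [n2 s2]]]] := oB x Bx.
exists (Z1 `|` Z2), (F1 ++ F2); split; first exact: countableU.
split; first by rewrite mem_cat negb_or n1 n2.
move=> y [hy nZ]; rewrite mem_cat negb_or in hy; case/andP: hy => h1 h2.
split; [apply: s1|apply: s2]; split => // => H; apply: nZ; by [left|right].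
Qed.

Lemma op_bigU (I : Type) (f : I -> set X) : (forall i, op (f i)) ->
  op (\bigcup_i f i).
Proof.
move=> H x [i _ fx].
have [Z [F [c [n s]]]] := H i x fx.
exists Z, F; split => //; split => // y Wy; exists i => //; exact: s.
Qed.

HB.instance Definition _ := isOpenTopological.Build X opT opI op_bigU.

Lemma openP (O : set X) : open O -> op O.
Proof. by []. Qed.

Lemma opP (O : set X) : op O -> open O.
Proof. by []. Qed.

Lemma W_open Z F : countable Z -> @open X (W Z F).
Proof. move=> cZ; apply: opP => x [nF nZ]; exists Z, F; by split => //; split => // y. Qed.

Lemma W_ne Z F : countable Z -> exists y, W Z F y.
Proof.
move=> cZ; have [N HN] := notin_large F.
have [y [qy Zy]] := fiber_big _ N cZ.
by exists y; split => //; rewrite qy; apply: HN.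
Qed.

Lemma nwd_fiber (E : set X) k : (forall y, E y -> q y = k) -> nowhere_dense E.
Proof.
move=> Ek; apply/seteqP; split => // x; rewrite /interior nbhsE => -[O [oO Ox] OE].
have [Z [F [cZ [_ WO]]]] := openP _ oO x Ox.
have [N HN] := notin_large (k :: F).
have [y [qy Zy]] := fiber_big _ N cZ.
have hy : q y \notin k :: F by rewrite qy; apply: HN.
move: hy; rewrite in_cons negb_or => /andP[hk hF].
have cly := OE y (WO y (conj hF Zy)).
have nb : nbhs y (W set0 [:: k]).
  apply: open_nbhs_nbhs; split; first exact: W_open.
  by split => //; rewrite in_cons negb_or hk.
have [z [Ez [Wz _]]] := cly _ nb.
by move: Wz; rewrite in_cons negb_or (Ek z Ez) eqxx.
Qed.

Lemma dense_W (D : set X) Z F : dense D -> countable Z ->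
  exists y, D y /\ W Z F y.
Proof.
move=> dD cZ; have [y Wy] := W_ne _ F cZ.
have [z [Wz Dz]] := dD (W Z F) (ex_intro _ y Wy) (W_open _ F cZ).
by exists z.
Qed.

Lemma discrete_countable (A : set X) : discrete_subspace A -> countable A.
Proof.
move=> dA.
have -> : A = \bigcup_(k in [set: nat]) (A `&` [set y | q y = k]).
  apply/seteqP; split => y; first by move=> Ay; exists (q y).
  by case=> k _ [].
apply: bigcup_countable; first exact: countableP.
move=> k _.
case: (pselect (exists x, A x /\ q x = k)) => [[x [Ax qx]]|nex]; last first.
  apply: sub_countable (countable0 _); apply: subset_card_le => y [Ay qy].
  by exfalso; apply: nex; exists y.
have [U [oU UA]] := dA x Ax.
have Ux : U x by have : [set x] x by []; rewrite -UA => -[].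
have [Z [F [cZ [nF WU]]]] := openP _ oU x Ux.
apply: (@sub_countable _ _ _ (Z `|` [set x])); last exact: countableU cZ (countable1 x).
apply: subset_card_le => y [Ay qy].
case: (pselect (Z y)) => [Zy|nZy]; first by left.
right.
have Uy : U y by apply: WU; split => //; rewrite qy -qx.
by have : (U `&` A) y by []; rewrite UA.
Qed.

Theorem mainTheorem10 :
  exists T : topologicalType,
    ([set: T] #= [set: nat -> bool]) /\ NWD_separable T /\ ~ d_separable T.
Proof.
exists X; split; first exact: card_eqxx.
split.
  move=> D dD.
  have H : forall n, exists k, n <= k /\ ~ countable (D n `&` [set y | q y = k]).
    move=> n; apply: contrapT => nex.
    have Hc : forall k, n <= k -> countable (D n `&` [set y | q y = k]).
      move=> k nk; apply: contrapT => nc; apply: nex; by exists k.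
    pose Z := \bigcup_(k in [set k | n <= k]) (D n `&` [set y | q y = k]).
    have cZ : countable Z.
      by apply: bigcup_countable; [exact: countableP| move=> k /= nk; exact: Hc].
    have [y [Dy [nF nZ]]] := dense_W _ _ (iota 0 n) (dD n) cZ.
    apply: nZ; exists (q y) => //=.
    by move: nF; rewrite mem_iota /= add0n -leqNgt.
  have [kk Hk] := choice H.
  exists (fun n => D n `&` [set y | q y = kk n]); split.
    move=> n; split; first by move=> y [].
    by apply: (@nwd_fiber _ (kk n)) => y [].
  move=> O [x Ox] oO.
  have [Z [F [cZ [_ WO]]]] := openP _ oO x Ox.
  have [N HN] := notin_large F.
  have [hN nc] := Hk N.
  case: (pselect (exists y, (D N `&` [set y | q y = kk N]) y /\ ~ Z y)) =>
      [[y [[Dy qy] nZy]]|nex]; last first.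
    exfalso; apply: nc; apply: sub_countable cZ; apply: subset_card_le => y Ey.
    by apply: contrapT => nZ; apply: nex; exists y.
  exists y; split.
    by apply: WO; split => //; rewrite qy; apply: HN.
  by exists N.
move=> [S [dS dense_S]].
have cC : countable (\bigcup_n S n).
  apply: bigcup_countable; first exact: countableP.
  by move=> n _; apply: discrete_countable.
have [y [[n _ Sy] [_ nC]]] := dense_W _ _ [::] dense_S cC.
by apply: nC; exists n.
Qed.
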